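(* Under the assumptions of Theorem 2 (the case $\varepsilon=0$), let $(u,v)$ be a classical solution on $[0,T)$ with $u>0$. Then $\int_0^1 v(x,t)\,dx=\overline v:=\int_0^1 v_0(x)\,dx$ for all $t\in[0,T)$, and there exists $C>0$ independent of $t$ and $T$ such that for all $t\in[0,T)$ \[ E(u,\alpha)(t)+\|(v-\overline v)(t)\|^2+\int_0^t\!\!\int_0^1\frac{(u_x)^2}{u}\,dx\,d\tau\le C . \]
   Context: Setting of Theorem 2: on $(0,1)\times(0,\infty)$, $u_t-(uv)_x=u_{xx}$, $v_t-u_x=0$, $(u,v)(x,0)=(u_0,v_0)(x)$, $u(0,t)=u(1,t)=\alpha(t)$ (no boundary condition on $v$); $u_0>0$, $(u_0,v_0)\in[H^2((0,1))]^2$ compatible with the boundary data; $\alpha$ smooth on $[0,\infty)$ with $\alpha\ge\underline\alpha>0$ and $\alpha'\in W^{1,1}(\mathbb{R}_+)$. The relative entropy is $E(u,\alpha)(t)=\int_0^1\big[(u\ln u-u)-(\alpha\ln\alpha-\alpha)-(u-\alpha)\ln\alpha\big]dx$. $\|\cdot\|$ is the $L^2((0,1))$ norm. *)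

(* Defs.v *)
From HB Require Import structures.
From mathcomp Require Import all_boot all_order all_algebra.
From mathcomp Require Import all_classical all_reals.
From mathcomp Require Import all_analysis.
From mathcomp Require Import Rstruct Rstruct_topology.
From Stdlib Require Import Reals.

Set Implicit Arguments.
Unset Strict Implicit.
Unset Printing Implicit Defensive.

Import Order.TTheory GRing.Theory Num.Theory.

Section LebesgueDefs.
Local Open Scope classical_set_scope.
Local Open Scope ring_scope.

Definition L1_on (D : set (measurableTypeR R)) (w : R -> R) : Prop :=
  @measurable_fun _ _ (measurableTypeR R) (measurableTypeR R) D w /\
  (\int[@lebesgue_measure R]_(x in D) (`|w x|)%:E < +oo)%E.

Definition L2_on (D : set (measurableTypeR R)) (w : R -> R) : Prop :=
  @measurable_fun _ _ (measurableTypeR R) (measurableTypeR R) D w /\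
  (\int[@lebesgue_measure R]_(x in D) ((w x) ^+ 2)%:E < +oo)%E.

(* f (its continuous representative on [0,1]) belongs to H^2((0,1)):
   f(x) = a + b x + \int_0^x \int_0^y w  on [0,1], with w in L^2((0,1)),
   i.e. f is C^1 on [0,1] with f' absolutely continuous and f'' = w in L^2. *)
Definition H2_01 (f : R -> R) : Prop :=
  exists (a b : R) (w : R -> R),
    L2_on `[0%R, 1%R] w /\
    forall x : R, (0 <= x <= 1)%R ->
      f x = a + b * x +
        Rintegral (@lebesgue_measure R) `[0%R, x]
          (fun y => Rintegral (@lebesgue_measure R) `[0%R, y] w).

Definition L1_Rplus (w : R -> R) : Prop := L1_on `[0%R, +oo[ w.

End LebesgueDefs.

From Coquelicot Require Import Coquelicot.
Open Scope R_scope.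

(* alpha is smooth (C^infinity); by Seeley extension this is equivalent to
   smoothness on [0, oo) as only values on [0, oo) are ever used. *)
Definition smooth (f : R -> R) : Prop :=
  forall (n : nat) (t : R), ex_derive (Derive_n f n) t.

Definition cont_on (f : R -> R -> R) (D : R -> R -> Prop) : Prop :=
  forall x t, D x t ->
    filterlim (fun p : R * R => f (fst p) (snd p))
      (within (fun p : R * R => D (fst p) (snd p)) (locally (x, t)))
      (locally (f x t)).

Definition Qcl (T : R) (x t : R) : Prop := 0 <= x <= 1 /\ 0 <= t < T.
Definition Qop (T : R) (x t : R) : Prop := 0 < x < 1 /\ 0 < t < T.

(* Classical solution on [0,T) of
     u_t - (u v)_x = u_xx,  v_t - u_x = 0  on (0,1) x (0,T),
     (u,v)(x,0) = (u0,v0)(x),  u(0,t) = u(1,t) = alpha(t),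
   with u > 0.  ux, vx are the (continuous up to the boundary) x-derivatives. *)
Definition classical_solution (alpha u0 v0 : R -> R) (T : R)
    (u v ux vx : R -> R -> R) : Prop :=
  cont_on u (Qcl T) /\ cont_on v (Qcl T) /\
  cont_on ux (Qcl T) /\ cont_on vx (Qcl T) /\
  (forall x t, 0 < x < 1 -> 0 <= t < T ->
     is_derive (fun y => u y t) x (ux x t) /\
     is_derive (fun y => v y t) x (vx x t)) /\
  (exists ut vt uxx : R -> R -> R,
     cont_on ut (Qop T) /\ cont_on vt (Qop T) /\ cont_on uxx (Qop T) /\
     forall x t, Qop T x t ->
       is_derive (fun s => u x s) t (ut x t) /\
       is_derive (fun s => v x s) t (vt x t) /\
       is_derive (fun y => ux y t) x (uxx x t) /\
       ut x t - (ux x t * v x t + u x t * vx x t) = uxx x t /\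
       vt x t - ux x t = 0) /\
  (forall x, 0 <= x <= 1 -> u x 0 = u0 x /\ v x 0 = v0 x) /\
  (forall t, 0 <= t < T -> u 0 t = alpha t /\ u 1 t = alpha t) /\
  (forall x t, Qcl T x t -> 0 < u x t).

Definition ent_density (w a : R) : R :=
  (w * ln w - w) - (a * ln a - a) - (w - a) * ln a.

Definition rel_entropy (u : R -> R -> R) (alpha : R -> R) (t : R) : R :=
  RInt (fun x => ent_density (u x t) (alpha t)) 0 1.

Definition L2sq01 (f : R -> R) : R := RInt (fun x => (f x) ^ 2) 0 1.

(* Main.v *)
Require Import Defs.
From Stdlib Require Import Reals.
From Coquelicot Require Import Coquelicot.
Open Scope R_scope.
From Stdlib Require Import Lra Psatz.


Lemma coq_part (w : R -> R) : (forall x, continuity_pt w x) ->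
  forall x, derivable_pt_lim (fun t => RInt (fun s => Rabs (w s)) 0 t) x (Rabs (w x)).
Proof.
intros Hw x. apply is_derive_Reals.
assert (Hc : forall y, continuous (fun s => Rabs (w s)) y).
{ intros y. apply continuity_pt_filterlim. exact (continuity_pt_comp w Rabs y (Hw y) (Rcontinuity_abs _)). }
apply (is_derive_RInt (fun s => Rabs (w s)) _ 0 x).
- apply filter_forall. intros t. apply (RInt_correct (V:=R_CompleteNormedModule)). apply ex_RInt_continuous. intros; apply Hc.
- apply Hc.
Qed.

Lemma coq_cont (w : R -> R) : (forall x, continuity_pt w x) -> forall x, continuity_pt (fun s => Rabs (w s)) x.
Proof. intros Hw x. exact (continuity_pt_comp w Rabs x (Hw x) (Rcontinuity_abs _)). Qed.

Lemma coq_RInt0 (f : R -> R) : RInt f 0 0 = 0.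
Proof. exact (RInt_point (V:=R_CompleteNormedModule) 0 f). Qed.

Lemma coq_cont_F (w : R -> R) : (forall x, continuity_pt w x) -> forall x, continuity_pt (fun t => RInt (fun s => Rabs (w s)) 0 t) x.
Proof. intros Hw x. apply derivable_continuous_pt. exists (Rabs (w x)). apply coq_part; auto. Qed.

Module Bridge.
From HB Require Import structures.
From mathcomp Require Import all_boot all_order all_algebra.
From mathcomp Require Import all_classical all_reals all_analysis.
From mathcomp Require Import Rstruct Rstruct_topology measurable_realfun.
Import Order.TTheory GRing.Theory Num.Theory numFieldNormedType.Exports.
Local Open Scope classical_set_scope.
Local Open Scope ring_scope.

Lemma dpl_bridge (F : R^o -> R^o) (x l : R) : Ranalysis1.derivable_pt_lim F x l ->
  derive.derivable F x 1 /\ derive1 F x = l.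
Proof.
move=> H.
have C : (fun h : R^o => h^-1 *: ((F \o shift x) (h *: (1:R^o)) - F x)) @ 0^' --> (l : R^o).
  apply/cvgrPdist_lt => e /Rstruct.RltP e0.
  have [d Hd] := H e e0.
  near=> h.
  have hn0 : h != 0 by near: h; exact: nbhs_dnbhs_neq.
  have hd : `|h| < pos d.
    near: h; apply: nbhs_dnbhs; apply: (@nbhs0_lt _ R^o); apply/Rstruct.RltP; exact: cond_pos.
  have hn0' : h <> 0%coqR by move/eqP: hn0.
  have hd' : (Rabs h < d)%coqR.
    by have X := Rstruct.RltP hd; rewrite RabsE.
  have := Hd h hn0' hd'.
  move=> /Rstruct.RltP; rewrite RabsE /=.
  have E : (h%:A : R^o) = h by rewrite /GRing.scale /= mulr1.
  rewrite E [h + x]addrC distrC.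
  by rewrite /Rdiv RmultE mulrC.
split; first by apply/cvgP; exact: C.
rewrite derive1E /derive; exact: cvg_lim C.
Unshelve. all: by end_near.
Qed.

Lemma L1_link (w : R -> R) : (forall x, continuity_pt w x) -> L1_Rplus w ->
  exists L : R, (0 <= L)%coqR /\ forall t, (0 <= t)%coqR ->
    (RInt (fun s => Rabs (w s)) 0 t <= L)%coqR.
Proof.
move=> wc [mw fin].
pose I := (\int[@lebesgue_measure R]_(x in `[0%R, +oo[) (`|w x|)%:E)%E.
have I0 : (0 <= I)%E by apply: integral_ge0 => x _; rewrite lee_fin normr_ge0.
have Ifin : I \is a fin_num by rewrite ge0_fin_numE.
exists (fine I); split.
  by apply/Rstruct.RleP; apply: fine_ge0.
move=> t t0.
pose F : R^o -> R^o := fun t => RInt (fun s => Rabs (w s)) 0 t.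
case: (Rle_lt_or_eq_dec _ _ t0) => [tpos|<-]; last first.
  by rewrite coq_RInt0; apply/Rstruct.RleP; apply: fine_ge0.
have Fd : forall x, derive.derivable F x 1 /\ derive1 F x = Rabs (w x).
  by move=> x; apply: dpl_bridge; apply: coq_part.
have Fc : forall x, {for x, continuous F}.
  by move=> x; apply/continuity_pt_cvg; apply: coq_cont_F.
have gc : forall x, {for x, continuous (fun s => Rabs (w s))}.
  by move=> x; apply/continuity_pt_cvg; apply: coq_cont.
have FTC := @continuous_FTC2 R (fun s => Rabs (w s)) F 0 t.
have tpos' : 0 < t by apply/Rstruct.RltP.
have h1 : {within `[0, t], continuous fun s : R => Rabs (w s)}.
  by apply: continuous_in_subspaceT => x _; apply: gc.
have h2 : derivable_oo_LRcontinuous F 0 t.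
  split.
  + by move=> x _; case: (Fd x).
  + by apply: cvg_at_right_filter; apply: Fc.
  + by apply: cvg_at_left_filter; apply: Fc.
have E := FTC tpos' h1 h2 (fun x _ => proj2 (Fd x)).
have F0 : F 0 = 0 by rewrite /F coq_RInt0.
rewrite F0 sube0 in E.
have sub : (\int[@lebesgue_measure R]_(x in `[0%R, t]) (Rabs (w x))%:E <= I)%E.
  rewrite /I; under eq_integral do rewrite RabsE.
  apply: ge0_subset_integral => //.
  - apply/measurable_EFinP. exact: (measurableT_comp (@normr_measurable _ _) mw).
  - by move=> x; rewrite /= !in_itv /= => /andP[-> _].
rewrite E in sub.
have := fineK Ifin.
move=> IE. rewrite -IE lee_fin in sub.
exact: (Rstruct.RleP sub).
Qed.
End Bridge.


Lemma RI_Chasles (f : R -> R) a b c : ex_RInt f a b -> ex_RInt f b c ->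
  RInt f a b + RInt f b c = RInt f a c.
Proof. intros. exact (RInt_Chasles (V:=R_CompleteNormedModule) f a b c H H0). Qed.

Lemma RI_minus (f g : R -> R) a b : ex_RInt f a b -> ex_RInt g a b ->
  RInt (fun x => f x - g x) a b = RInt f a b - RInt g a b.
Proof. intros. exact (RInt_minus (V:=R_CompleteNormedModule) f g a b H H0). Qed.

Lemma RI_plus (f g : R -> R) a b : ex_RInt f a b -> ex_RInt g a b ->
  RInt (fun x => f x + g x) a b = RInt f a b + RInt g a b.
Proof. intros. exact (RInt_plus (V:=R_CompleteNormedModule) f g a b H H0). Qed.

Lemma RI_scal (f : R -> R) a b l : ex_RInt f a b ->
  RInt (fun x => l * f x) a b = l * RInt f a b.
Proof. intros. exact (RInt_scal (V:=R_CompleteNormedModule) f a b l H). Qed.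

Lemma RI_ext (f g : R -> R) a b : (forall x, Rmin a b < x < Rmax a b -> f x = g x) ->
  RInt f a b = RInt g a b.
Proof. intros. exact (RInt_ext (V:=R_CompleteNormedModule) f g a b H). Qed.

Lemma RI_const a b c : RInt (fun _ => c) a b = (b - a) * c.
Proof. exact (RInt_const (V:=R_CompleteNormedModule) a b c). Qed.

Lemma RI_point (f : R -> R) a : RInt f a a = 0.
Proof. exact (RInt_point (V:=R_CompleteNormedModule) a f). Qed.

Lemma exRI_cont (f : R -> R) a b : (forall x, continuity_pt f x) -> ex_RInt f a b.
Proof.
intros H. apply (ex_RInt_continuous (V:=R_CompleteNormedModule)).
intros z _. apply continuity_pt_filterlim. apply H.
Qed.

Lemma exRI_cont' (f : R -> R) a b : a <= b -> (forall x, a <= x <= b -> continuity_pt f x) -> ex_RInt f a b.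
Proof.
intros Hab H. apply (ex_RInt_continuous (V:=R_CompleteNormedModule)).
intros z Hz. apply continuity_pt_filterlim. apply H.
rewrite Rmin_left in Hz by lra. rewrite Rmax_right in Hz by lra. exact Hz.
Qed.

Lemma exRI_ext (f g : R -> R) a b : (forall x, Rmin a b < x < Rmax a b -> f x = g x) ->
  ex_RInt f a b -> ex_RInt g a b.
Proof. intros. exact (ex_RInt_ext (V:=R_NormedModule) f g a b H H0). Qed.

Lemma RI_bound (f : R -> R) a b M : a <= b -> ex_RInt f a b ->
  (forall x, a <= x <= b -> Rabs (f x) <= M) -> Rabs (RInt f a b) <= (b - a) * M.
Proof. intros. apply abs_RInt_le_const; auto. Qed.

Lemma RI_diff_bound (f g : R -> R) a b M : a <= b -> ex_RInt f a b -> ex_RInt g a b ->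
  (forall x, a <= x <= b -> Rabs (f x - g x) <= M) ->
  Rabs (RInt f a b - RInt g a b) <= (b - a) * M.
Proof.
intros. rewrite <- RI_minus by auto. apply RI_bound; auto.
apply (ex_RInt_minus (V:=R_NormedModule)); auto.
Qed.

Lemma RI_le (f g : R -> R) a b : a <= b -> ex_RInt f a b -> ex_RInt g a b ->
  (forall x, a <= x <= b -> f x <= g x) -> RInt f a b <= RInt g a b.
Proof. intros. apply RInt_le; auto. intros; apply H2; lra. Qed.

Lemma RI_ge0 (f : R -> R) a b : a <= b -> ex_RInt f a b ->
  (forall x, a <= x <= b -> 0 <= f x) -> 0 <= RInt f a b.
Proof. intros. apply RInt_ge_0; auto. intros; apply H1; lra. Qed.

Definition clp (a b x : R) := Rmax a (Rmin b x).

Lemma clp_in a b x : a <= b -> a <= clp a b x <= b.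
Proof. intros. unfold clp, Rmax, Rmin. repeat destruct Rle_dec; lra. Qed.

Lemma clp_id a b x : a <= x <= b -> clp a b x = x.
Proof. intros. unfold clp, Rmax, Rmin. repeat destruct Rle_dec; lra. Qed.

Lemma clp_lip a b x y : a <= b -> Rabs (clp a b x - clp a b y) <= Rabs (x - y).
Proof.
intros. unfold clp, Rmax, Rmin. repeat destruct Rle_dec;
  unfold Rabs; repeat destruct Rcase_abs; lra.
Qed.

Lemma cont_on_eps (f : R -> R -> R) (D : R -> R -> Prop) x t :
  cont_on f D -> D x t -> forall eps, 0 < eps -> exists del, 0 < del /\
  forall y s, D y s -> Rabs (y - x) < del -> Rabs (s - t) < del -> Rabs (f y s - f x t) < eps.
Proof.
intros Hf Hxt eps He.
specialize (Hf x t Hxt (fun z => Rabs (z - f x t) < eps)).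
assert (Hl : locally (f x t) (fun z => Rabs (z - f x t) < eps)).
{ exists (mkposreal eps He). intros z Hz. exact Hz. }
specialize (Hf Hl). destruct Hf as [d Hd].
exists d. split. apply cond_pos.
intros y s Hys Hy Hs. apply (Hd (y, s)); [|exact Hys].
split; simpl; assumption.
Qed.

Definition cont2 (f : R -> R -> R) := forall x t, continuity_2d_pt f x t.

Lemma clamp_cont (f : R -> R -> R) (D : R -> R -> Prop) a b c d :
  cont_on f D -> a <= b -> c <= d ->
  (forall x t, a <= x <= b -> c <= t <= d -> D x t) ->
  cont2 (fun x t => f (clp a b x) (clp c d t)).
Proof.
intros Hf Hab Hcd HD x t eps.
destruct (cont_on_eps f D (clp a b x) (clp c d t) Hf (HD _ _ (clp_in a b x Hab) (clp_in c d t Hcd)) eps (cond_pos eps))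
  as [del [Hdel H]].
exists (mkposreal del Hdel). intros u v Hu Hv. simpl in *.
apply H. apply HD; apply clp_in; auto.
eapply Rle_lt_trans. apply clp_lip; auto. exact Hu.
eapply Rle_lt_trans. apply clp_lip; auto. exact Hv.
Qed.

Lemma cont2_x (f : R -> R -> R) x t : continuity_2d_pt f x t -> continuity_pt (fun y => f y t) x.
Proof.
intros H. apply continuity_pt_filterlim. intros P [eps HP].
destruct (H eps) as [d Hd]. exists d. intros y Hy. apply HP.
apply Hd. exact Hy. rewrite Rminus_eq_0, Rabs_R0. apply cond_pos.
Qed.

Lemma cont2_t (f : R -> R -> R) x t : continuity_2d_pt f x t -> continuity_pt (fun s => f x s) t.
Proof.
intros H. apply continuity_pt_filterlim. intros P [eps HP].
destruct (H eps) as [d Hd]. exists d. intros y Hy. apply HP.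
apply Hd. rewrite Rminus_eq_0, Rabs_R0. apply cond_pos. exact Hy.
Qed.

Lemma eps_cont (g : R -> R) s0 :
  (forall eps, 0 < eps -> exists del, 0 < del /\ forall s, Rabs (s - s0) < del -> Rabs (g s - g s0) < eps) ->
  continuity_pt g s0.
Proof.
intros H. apply continuity_pt_filterlim. intros P [eps HP].
destruct (H eps (cond_pos eps)) as [d [Hd Hs]].
exists (mkposreal d Hd). intros y Hy. apply HP. apply Hs. exact Hy.
Qed.

Lemma cont2_all_x (f : R -> R -> R) t : cont2 f -> forall x, continuity_pt (fun y => f y t) x.
Proof. intros H x. apply cont2_x. apply H. Qed.
Lemma cont2_all_t (f : R -> R -> R) x : cont2 f -> forall t, continuity_pt (fun s => f x s) t.
Proof. intros H t. apply cont2_t. apply H. Qed.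

Lemma bnd2 (f : R -> R -> R) a b c d : cont2 f -> a <= b -> c <= d ->
  exists M, 0 <= M /\ forall x y, a <= x <= b -> c <= y <= d -> Rabs (f x y) <= M.
Proof.
intros Hf Hab Hcd.
destruct (uniform_continuity_2d f a b c d (fun x y _ _ => Hf x y) (mkposreal 1 Rlt_0_1)) as [del Hdel].
destruct (continuity_ab_maj (fun y => Rabs (f a y)) c d Hcd) as [ym [Hym Hymr]].
{ intros y _.
  exact (continuity_pt_comp (fun s => f a s) Rabs y (cont2_t f a y (Hf a y)) (Rcontinuity_abs _)). }
set (M0 := Rabs (f a ym)).
assert (Hind : forall n : nat, forall x y, a <= x <= b -> c <= y <= d ->
   x <= a + INR n * (del / 2) -> Rabs (f x y) <= M0 + INR n).
{ induction n as [|n IH]; intros x y Hx Hy Hxn.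
  - simpl in *. replace x with a by lra. rewrite Rplus_0_r. apply Hym. exact Hy.
  - rewrite S_INR in *.
    destruct (Rle_dec x (a + INR n * (del/2))) as [Hle|Hgt].
    + specialize (IH x y Hx Hy Hle). lra.
    + set (x' := Rmax a (x - del/2)).
      assert (Hx' : a <= x' <= b). { unfold x', Rmax. destruct Rle_dec; lra. }
      assert (Hx'n : x' <= a + INR n * (del/2)).
      { unfold x', Rmax. pose proof (pos_INR n). pose proof (cond_pos del). destruct Rle_dec; nra. }
      specialize (IH x' y Hx' Hy Hx'n).
      assert (Hd : Rabs (f x y - f x' y) < 1).
      { apply (Hdel x' y x y Hx' Hy Hx Hy).
        unfold x', Rmax. pose proof (cond_pos del). destruct Rle_dec; unfold Rabs; destruct Rcase_abs; lra.
        rewrite Rminus_eq_0, Rabs_R0. apply cond_pos. }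
      assert (Rabs (f x y) <= Rabs (f x' y) + Rabs (f x y - f x' y)).
      { replace (f x y) with (f x' y + (f x y - f x' y)) at 1 by ring. apply Rabs_triang. }
      lra. }
destruct (INR_archimed (del/2) (b - a)) as [n Hn].
{ pose proof (cond_pos del). lra. }
exists (M0 + INR n). split.
{ pose proof (pos_INR n). pose proof (Rabs_pos (f a ym)). unfold M0. lra. }
intros x y Hx Hy. apply Hind; auto. lra.
Qed.

Lemma pc (f : R -> R -> R) a b : cont2 f -> a <= b ->
  forall s0, continuity_pt (fun s => RInt (fun x => f x s) a b) s0.
Proof.
intros Hf Hab s0. apply eps_cont. intros eps He.
assert (Hp : 0 < eps / (b - a + 1)) by (apply Rdiv_lt_0_compat; lra).
destruct (uniform_continuity_2d f a b (s0 - 1) (s0 + 1) (fun x y _ _ => Hf x y) (mkposreal _ Hp)) as [del Hdel].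
exists (Rmin del 1). split. apply Rmin_pos. apply cond_pos. lra.
intros s Hs.
assert (Hs1 : Rabs (s - s0) < del) by (eapply Rlt_le_trans; [exact Hs| apply Rmin_l]).
assert (Hs2 : Rabs (s - s0) < 1) by (eapply Rlt_le_trans; [exact Hs| apply Rmin_r]).
eapply Rle_lt_trans.
apply RI_diff_bound with (M := eps / (b - a + 1)); auto.
apply exRI_cont. apply cont2_all_x. auto.
apply exRI_cont. apply cont2_all_x. auto.
intros x Hx. left. apply (Hdel x s0 x s Hx). split; lra. exact Hx.
revert Hs2. unfold Rabs. destruct Rcase_abs; intros; lra.
rewrite Rminus_eq_0, Rabs_R0. apply cond_pos. exact Hs1.
apply Rlt_le_trans with ((b - a + 1) * (eps / (b - a + 1))).
apply Rmult_lt_compat_r. exact Hp. lra.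
right. field. lra.
Qed.

Lemma open_cont (h : R -> R -> R) T x t : cont_on h (Qop T) -> Qop T x t ->
  continuity_2d_pt h x t /\ continuity_2d_pt (fun t x => h x t) t x.
Proof.
intros Hh [Hx Ht].
assert (HQ : forall eps, 0 < eps -> exists del, 0 < del /\ forall y s, Rabs (y - x) < del -> Rabs (s - t) < del -> Rabs (h y s - h x t) < eps).
{ intros eps He. destruct (cont_on_eps h (Qop T) x t Hh (conj Hx Ht) eps He) as [d [Hd H]].
  exists (Rmin d (Rmin (Rmin x (1 - x)) (Rmin t (T - t)))). split.
  { repeat apply Rmin_pos; lra. }
  intros y s Hy Hs.
  pose proof (Rmin_l d (Rmin (Rmin x (1 - x)) (Rmin t (T - t)))).
  pose proof (Rmin_r d (Rmin (Rmin x (1 - x)) (Rmin t (T - t)))).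
  pose proof (Rmin_l (Rmin x (1 - x)) (Rmin t (T - t))).
  pose proof (Rmin_r (Rmin x (1 - x)) (Rmin t (T - t))).
  pose proof (Rmin_l x (1 - x)). pose proof (Rmin_r x (1 - x)).
  pose proof (Rmin_l t (T - t)). pose proof (Rmin_r t (T - t)).
  apply H; try lra.
  revert Hy Hs. unfold Qop, Rabs. destruct (Rcase_abs (y - x)); destruct (Rcase_abs (s - t)); intros; lra. }
split.
- intros eps. destruct (HQ eps (cond_pos eps)) as [d [Hd H]].
  exists (mkposreal d Hd). intros u v Hu Hv. apply H; auto.
- intros eps. destruct (HQ eps (cond_pos eps)) as [d [Hd H]].
  exists (mkposreal d Hd). intros u v Hu Hv. apply H; auto.
Qed.

Lemma zero_of_eps (D K : R) : (forall eps, 0 < eps -> Rabs D <= K * eps) -> D = 0.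
Proof.
intros H. destruct (Req_dec D 0) as [|Hn]; auto.
exfalso. assert (Hp : 0 < Rabs D) by (apply Rabs_pos_lt; auto).
assert (He : 0 < Rabs D / (2 * (Rabs K + 1))).
{ apply Rdiv_lt_0_compat; auto. pose proof (Rabs_pos K). lra. }
specialize (H _ He).
assert (K * (Rabs D / (2 * (Rabs K + 1))) <= Rabs K * (Rabs D / (2 * (Rabs K + 1)))).
{ apply Rmult_le_compat_r. lra. apply RRle_abs. }
assert (Rabs K * (Rabs D / (2 * (Rabs K + 1))) < Rabs D).
{ pose proof (Rabs_pos K). apply Rmult_lt_reg_r with (2 * (Rabs K + 1)). lra.
  field_simplify; try lra. nra. }
lra.
Qed.

Lemma chas3 (h : R -> R) a b : (forall x, continuity_pt h x) ->
  RInt h 0 1 - RInt h a b = RInt h 0 a + RInt h b 1.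
Proof.
intros Hc.
rewrite <- (RI_Chasles h 0 a 1) by (apply exRI_cont; auto).
rewrite <- (RI_Chasles h a b 1) by (apply exRI_cont; auto).
ring.
Qed.

Lemma Qcl_rect T t2 : t2 < T -> forall x t, 0 <= x <= 1 -> 0 <= t <= t2 -> Qcl T x t.
Proof. intros. unfold Qcl. lra. Qed.

Lemma stepA (T τ a b s : R) (f ft Ψ ψx g : R -> R -> R) :
  0 < τ < T -> 0 < a < b -> b < 1 -> 0 < s <= τ ->
  cont_on f (Qcl T) -> cont_on Ψ (Qcl T) -> cont_on g (Qcl T) ->
  cont_on ft (Qop T) -> cont_on ψx (Qop T) ->
  (forall x t, Qop T x t -> is_derive (fun s => f x s) t (ft x t) /\
     is_derive (fun y => Ψ y t) x (ψx x t) /\ ft x t = ψx x t - g x t) ->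
  RInt (fun x => f x τ) a b - RInt (fun x => f x s) a b =
  RInt (fun σ => Ψ (clp 0 1 b) (clp 0 ((τ + T)/2) σ) - Ψ (clp 0 1 a) (clp 0 ((τ + T)/2) σ)
     - RInt (fun x => g (clp 0 1 x) (clp 0 ((τ + T)/2) σ)) a b) s τ.
Proof.
intros Hτ Hab Hb1 Hs Cf CP Cg Cft Cpx Hd.
set (τ2 := (τ + T)/2).
assert (Hτ2 : τ < τ2 < T) by (unfold τ2; lra).
set (Pc := fun x σ => Ψ (clp 0 1 x) (clp 0 τ2 σ)).
set (Gc := fun x σ => g (clp 0 1 x) (clp 0 τ2 σ)).
set (Fc := fun x σ => f (clp 0 1 x) (clp 0 τ2 σ)).
assert (HR : forall x t, 0 <= x <= 1 -> 0 <= t <= τ2 -> Qcl T x t) by (apply Qcl_rect; lra).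
assert (CPc : cont2 Pc) by (apply (clamp_cont Ψ (Qcl T)); auto; lra).
assert (CGc : cont2 Gc) by (apply (clamp_cont g (Qcl T)); auto; lra).
assert (CFc : cont2 Fc) by (apply (clamp_cont f (Qcl T)); auto; lra).
assert (Eid : forall x t, 0 <= x <= 1 -> 0 <= t <= τ2 -> clp 0 1 x = x /\ clp 0 τ2 t = t).
{ intros. split; apply clp_id; lra. }
set (df := fun σ => Pc b σ - Pc a σ - RInt (fun x => Gc x σ) a b).
change (RInt (fun x => f x τ) a b - RInt (fun x => f x s) a b = RInt df s τ).
set (F := fun σ => RInt (fun x => f x σ) a b).
assert (Hmm : Rmin a b = a /\ Rmax a b = b) by (split; [apply Rmin_left|apply Rmax_right]; lra).
assert (HFd : forall σ, s <= σ <= τ -> is_derive F σ (df σ)).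
{ intros σ Hσ.
  assert (Hp := is_derive_RInt_param (fun σ x => f x σ) a b σ).
  assert (E : RInt (fun x => Derive (fun u => f x u) σ) a b = df σ).
  { rewrite (RI_ext _ (fun x => ψx x σ - g x σ)).
    2:{ intros x Hx. rewrite (proj1 Hmm), (proj2 Hmm) in Hx.
        destruct (Hd x σ) as [H1 [H2 H3]]. split; lra.
        rewrite <- H3. apply is_derive_unique. exact H1. }
    assert (Hpx : forall x, a <= x <= b -> continuity_pt (fun y => ψx y σ) x).
    { intros x Hx. apply cont2_x. apply (open_cont ψx T x σ Cpx). split; lra. }
    assert (Eg : RInt (fun x => g x σ) a b = RInt (fun x => Gc x σ) a b).
    { apply RI_ext. intros x Hx. rewrite (proj1 Hmm), (proj2 Hmm) in Hx.
      unfold Gc. destruct (Eid x σ) as [-> ->]; auto; lra. }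
    assert (exg : ex_RInt (fun x => g x σ) a b).
    { apply (exRI_ext (fun x => Gc x σ)). intros x Hx. rewrite (proj1 Hmm), (proj2 Hmm) in Hx.
      unfold Gc. destruct (Eid x σ) as [-> ->]; auto; lra.
      apply exRI_cont. apply cont2_all_x. auto. }
    rewrite RI_minus; auto. 2:{ apply exRI_cont'. lra. auto. }
    rewrite Eg. unfold df. f_equal.
    assert (Hi := is_RInt_derive (V:=R_CompleteNormedModule) (fun y => Ψ y σ) (fun y => ψx y σ) a b).
    rewrite (proj1 Hmm), (proj2 Hmm) in Hi.
    assert (Hi' : is_RInt (fun y => ψx y σ) a b (minus (Ψ b σ) (Ψ a σ))).
    { apply Hi.
      - intros x Hx. apply (Hd x σ). split; lra.
      - intros x Hx. apply continuity_pt_filterlim. apply Hpx. exact Hx. }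
    rewrite (is_RInt_unique _ _ _ _ Hi').
    unfold Pc. destruct (Eid b σ) as [-> ->]; try lra. destruct (Eid a σ) as [-> _]; try lra.
    reflexivity. }
  rewrite <- E. apply Hp.
  - assert (Hr : 0 < Rmin σ (T - σ)) by (apply Rmin_pos; lra).
    exists (mkposreal _ Hr). intros y Hy x Hx. rewrite (proj1 Hmm), (proj2 Hmm) in Hx.
    simpl in Hy. unfold ball in Hy; simpl in Hy; unfold AbsRing_ball, abs, minus, plus, opp in Hy; simpl in Hy.
    pose proof (Rmin_l σ (T - σ)). pose proof (Rmin_r σ (T - σ)).
    exists (ft x y). apply (Hd x y). split. lra.
    revert Hy. unfold Rabs. destruct Rcase_abs; intros; lra.
  - intros x Hx. rewrite (proj1 Hmm), (proj2 Hmm) in Hx.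
    apply continuity_2d_pt_ext_loc with (f := fun u v => ft v u).
    + assert (Hr : 0 < Rmin (Rmin σ (T - σ)) (Rmin x (1 - x))) by (repeat apply Rmin_pos; lra).
      exists (mkposreal _ Hr). intros u v Hu Hv. simpl in Hu, Hv.
      pose proof (Rmin_l (Rmin σ (T - σ)) (Rmin x (1 - x))).
      pose proof (Rmin_r (Rmin σ (T - σ)) (Rmin x (1 - x))).
      pose proof (Rmin_l σ (T - σ)). pose proof (Rmin_r σ (T - σ)).
      pose proof (Rmin_l x (1 - x)). pose proof (Rmin_r x (1 - x)).
      symmetry. apply is_derive_unique. apply (Hd v u).
      revert Hu Hv. unfold Qop, Rabs. destruct (Rcase_abs (u - σ)); destruct (Rcase_abs (v - x)); intros; lra.
    + apply (open_cont ft T x σ Cft). split; lra.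
  - assert (Hr : 0 < Rmin σ (τ2 - σ)) by (apply Rmin_pos; lra).
    exists (mkposreal _ Hr). intros y Hy.
    simpl in Hy. unfold ball in Hy; simpl in Hy; unfold AbsRing_ball, abs, minus, plus, opp in Hy; simpl in Hy.
    pose proof (Rmin_l σ (τ2 - σ)). pose proof (Rmin_r σ (τ2 - σ)).
    apply (exRI_ext (fun x => Fc x y)).
    + intros x Hx. rewrite (proj1 Hmm), (proj2 Hmm) in Hx.
      unfold Fc. destruct (Eid x y) as [-> ->]; auto; try lra.
      revert Hy. unfold Rabs. destruct Rcase_abs; intros; lra.
    + apply exRI_cont. apply cont2_all_x. auto. }
assert (Hdc : forall σ, continuity_pt df σ).
{ intros σ. unfold df. apply continuity_pt_minus. apply continuity_pt_minus.
  apply cont2_all_t; auto. apply cont2_all_t; auto. apply pc; auto; lra. }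
assert (Hi := is_RInt_derive (V:=R_CompleteNormedModule) F df s τ).
rewrite Rmin_left in Hi by lra. rewrite Rmax_right in Hi by lra.
symmetry. apply is_RInt_unique. apply Hi.
- exact HFd.
- intros x _. apply continuity_pt_filterlim. apply Hdc.
Qed.

Lemma core (T τ : R) (f ft Ψ ψx g : R -> R -> R) :
  0 < τ < T ->
  cont_on f (Qcl T) -> cont_on Ψ (Qcl T) -> cont_on g (Qcl T) ->
  cont_on ft (Qop T) -> cont_on ψx (Qop T) ->
  (forall x t, Qop T x t -> is_derive (fun s => f x s) t (ft x t) /\
     is_derive (fun y => Ψ y t) x (ψx x t) /\ ft x t = ψx x t - g x t) ->
  RInt (fun x => f x τ) 0 1 - RInt (fun x => f x 0) 0 1 =
  RInt (fun σ => Ψ 1 σ - Ψ 0 σ) 0 τ - RInt (fun σ => RInt (fun x => g x σ) 0 1) 0 τ.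
Proof.
intros Hτ Cf CP Cg Cft Cpx Hd.
assert (SA := fun a b s H1 H2 H3 => stepA T τ a b s f ft Ψ ψx g Hτ H1 H2 H3 Cf CP Cg Cft Cpx Hd).
set (τ2 := (τ + T)/2) in SA.
assert (Hτ2 : τ < τ2 < T) by (unfold τ2; lra).
set (Pc := fun x σ => Ψ (clp 0 1 x) (clp 0 τ2 σ)) in SA.
set (Gc := fun x σ => g (clp 0 1 x) (clp 0 τ2 σ)) in SA.
set (Fc := fun x σ => f (clp 0 1 x) (clp 0 τ2 σ)).
assert (HR : forall x t, 0 <= x <= 1 -> 0 <= t <= τ2 -> Qcl T x t) by (apply Qcl_rect; lra).
assert (CPc : cont2 Pc) by (apply (clamp_cont Ψ (Qcl T)); auto; lra).
assert (CGc : cont2 Gc) by (apply (clamp_cont g (Qcl T)); auto; lra).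
assert (CFc : cont2 Fc) by (apply (clamp_cont f (Qcl T)); auto; lra).
assert (Eid : forall x t, 0 <= x <= 1 -> 0 <= t <= τ2 -> clp 0 1 x = x /\ clp 0 τ2 t = t).
{ intros. split; apply clp_id; lra. }
assert (EF : forall a b σ, 0 <= a <= b -> b <= 1 -> 0 <= σ <= τ2 ->
   RInt (fun x => f x σ) a b = RInt (fun x => Fc x σ) a b).
{ intros a b σ H1 H2 H3. apply RI_ext. intros x Hx.
  rewrite Rmin_left in Hx by lra. rewrite Rmax_right in Hx by lra.
  unfold Fc. destruct (Eid x σ) as [-> ->]; auto; lra. }
set (Φf := fun a b σ => RInt (fun x => Fc x σ) a b).
set (Φg := fun a b σ => RInt (fun x => Gc x σ) a b).
set (Q := fun σ => Pc 1 σ - Pc 0 σ - Φg 0 1 σ).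
assert (CΦg : forall a b, a <= b -> forall σ, continuity_pt (Φg a b) σ).
{ intros. unfold Φg. apply pc; auto. }
assert (CQ : forall σ, continuity_pt Q σ).
{ intros σ. unfold Q. apply continuity_pt_minus. apply continuity_pt_minus.
  apply cont2_all_t; auto. apply cont2_all_t; auto. apply CΦg; lra. }
assert (Main : Φf 0 1 τ - Φf 0 1 0 = RInt Q 0 τ).
{ destruct (bnd2 Fc 0 1 0 τ CFc) as [Mf [HMf0 HMf]]; try lra.
  destruct (bnd2 Gc 0 1 0 τ CGc) as [Mg [HMg0 HMg]]; try lra.
  destruct (bnd2 Pc 0 1 0 τ CPc) as [MP [HMP0 HMP]]; try lra.
  apply Rminus_diag_uniq. apply (zero_of_eps _ (4 + 2*τ)). intros eps He.
  destruct (uniform_continuity_2d Pc 0 1 0 τ (fun x y _ _ => CPc x y) (mkposreal eps He)) as [d1 Hd1].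
  destruct (uniform_continuity_2d Fc 0 1 0 τ (fun x y _ _ => CFc x y) (mkposreal eps He)) as [d2 Hd2].
  simpl in Hd1, Hd2.
  pose proof (cond_pos d1) as Hd1p. pose proof (cond_pos d2) as Hd2p.
  assert (Hk1 : 0 < eps / (2*Mf + τ*Mg + 1)) by (apply Rdiv_lt_0_compat; nra).
  assert (Hk2 : 0 < eps / (2*MP + Mg + 1)) by (apply Rdiv_lt_0_compat; nra).
  set (η := Rmin (Rmin (1/4) (d1/2)) (eps / (2*Mf + τ*Mg + 1))).
  assert (Hη1 : 0 < η) by (unfold η; repeat apply Rmin_pos; lra).
  assert (Hη2 : η <= 1/4) by (unfold η; eapply Rle_trans; [apply Rmin_l|apply Rmin_l]).
  assert (Hη3 : η <= d1/2) by (unfold η; eapply Rle_trans; [apply Rmin_l|apply Rmin_r]).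
  assert (Hη4 : η * (2*Mf + τ*Mg) <= eps).
  { assert (η <= eps / (2*Mf + τ*Mg + 1)) by (unfold η; apply Rmin_r).
    apply Rle_trans with (η * (2*Mf + τ*Mg + 1)). nra.
    apply Rle_trans with (eps / (2*Mf + τ*Mg + 1) * (2*Mf + τ*Mg + 1)). apply Rmult_le_compat_r; nra.
    right. field. nra. }
  set (s := Rmin (Rmin τ (d2/2)) (eps / (2*MP + Mg + 1))).
  assert (Hs1 : 0 < s) by (unfold s; repeat apply Rmin_pos; lra).
  assert (Hs2 : s <= τ) by (unfold s; eapply Rle_trans; [apply Rmin_l|apply Rmin_l]).
  assert (Hs3 : s <= d2/2) by (unfold s; eapply Rle_trans; [apply Rmin_l|apply Rmin_r]).
  assert (Hs4 : s * (2*MP + Mg) <= eps).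
  { assert (s <= eps / (2*MP + Mg + 1)) by (unfold s; apply Rmin_r).
    apply Rle_trans with (s * (2*MP + Mg + 1)). nra.
    apply Rle_trans with (eps / (2*MP + Mg + 1) * (2*MP + Mg + 1)). apply Rmult_le_compat_r; nra.
    right. field. nra. }
  set (a := η). set (b := 1 - η).
  set (Qab := fun σ => Pc b σ - Pc a σ - Φg a b σ).
  assert (HA : Φf a b τ - Φf a b s = RInt Qab s τ).
  { unfold Φf. rewrite <- !EF by (unfold a, b; lra). apply SA; unfold a, b; lra. }
  assert (B1 : forall σ, 0 <= σ <= τ -> Rabs (Φf 0 1 σ - Φf a b σ) <= 2 * η * Mf).
  { intros σ Hσ. unfold Φf. rewrite chas3 by (apply cont2_all_x; auto).
    eapply Rle_trans. apply Rabs_triang.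
    assert (Rabs (RInt (fun x => Fc x σ) 0 a) <= (a - 0) * Mf).
    { apply RI_bound. unfold a; lra. apply exRI_cont. apply cont2_all_x; auto.
      intros x Hx. apply HMf; unfold a in Hx; lra. }
    assert (Rabs (RInt (fun x => Fc x σ) b 1) <= (1 - b) * Mf).
    { apply RI_bound. unfold b; lra. apply exRI_cont. apply cont2_all_x; auto.
      intros x Hx. apply HMf; unfold b in Hx; lra. }
    unfold a, b in *. lra. }
  assert (B2 : Rabs (Φf 0 1 s - Φf 0 1 0) <= (1 - 0) * eps).
  { unfold Φf. apply RI_diff_bound. lra. apply exRI_cont. apply cont2_all_x; auto.
    apply exRI_cont. apply cont2_all_x; auto.
    intros x Hx. left. apply (Hd2 x 0 x s); try lra.
    rewrite Rminus_eq_0, Rabs_R0. lra. rewrite Rminus_0_r, Rabs_pos_eq; lra. }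
  assert (B3 : Rabs (RInt Qab s τ - RInt Q s τ) <= (τ - s) * (2 * eps + 2 * η * Mg)).
  { apply RI_diff_bound. lra.
    apply exRI_cont. intros σ. unfold Qab. apply continuity_pt_minus. apply continuity_pt_minus.
    apply cont2_all_t; auto. apply cont2_all_t; auto. apply CΦg. unfold a, b; lra.
    apply exRI_cont. apply CQ.
    intros σ Hσ. unfold Qab, Q.
    assert (Rabs (Pc b σ - Pc 1 σ) < eps).
    { apply (Hd1 1 σ b σ); try lra. unfold b; lra. unfold b.
      replace (1 - η - 1) with (- η) by ring. rewrite Rabs_Ropp, Rabs_pos_eq; lra.
      rewrite Rminus_eq_0, Rabs_R0. lra. }
    assert (Rabs (Pc a σ - Pc 0 σ) < eps).
    { apply (Hd1 0 σ a σ); try lra. unfold a; lra. unfold a.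
      rewrite Rminus_0_r, Rabs_pos_eq; lra.
      rewrite Rminus_eq_0, Rabs_R0. lra. }
    assert (Rabs (Φg 0 1 σ - Φg a b σ) <= 2 * η * Mg).
    { unfold Φg. rewrite chas3 by (apply cont2_all_x; auto).
      eapply Rle_trans. apply Rabs_triang.
      assert (Rabs (RInt (fun x => Gc x σ) 0 a) <= (a - 0) * Mg).
      { apply RI_bound. unfold a; lra. apply exRI_cont. apply cont2_all_x; auto.
        intros x Hx. apply HMg; unfold a in Hx; lra. }
      assert (Rabs (RInt (fun x => Gc x σ) b 1) <= (1 - b) * Mg).
      { apply RI_bound. unfold b; lra. apply exRI_cont. apply cont2_all_x; auto.
        intros x Hx. apply HMg; unfold b in Hx; lra. }
      unfold a, b in *. lra. }
    apply Rlt_le in H. apply Rlt_le in H0.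
    apply Rabs_le_between in H. apply Rabs_le_between in H0. apply Rabs_le_between in H1.
    apply Rabs_le. lra. }
  assert (B4 : Rabs (RInt Q 0 s) <= (s - 0) * (2 * MP + Mg)).
  { apply RI_bound. lra. apply exRI_cont. apply CQ.
    intros σ Hσ. unfold Q.
    assert (Rabs (Φg 0 1 σ) <= (1 - 0) * Mg).
    { unfold Φg. apply RI_bound. lra. apply exRI_cont. apply cont2_all_x; auto.
      intros x Hx. apply HMg; lra. }
    assert (Rabs (Pc 1 σ) <= MP) by (apply HMP; lra).
    assert (Rabs (Pc 0 σ) <= MP) by (apply HMP; lra).
    apply Rabs_le_between in H. apply Rabs_le_between in H0. apply Rabs_le_between in H1.
    apply Rabs_le. lra. }
  assert (Ch : RInt Q 0 τ = RInt Q 0 s + RInt Q s τ).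
  { symmetry. apply RI_Chasles; apply exRI_cont; apply CQ. }
  pose proof (B1 τ ltac:(lra)) as B1t. pose proof (B1 s ltac:(lra)) as B1s.
  apply Rabs_le_between in B1t. apply Rabs_le_between in B1s. apply Rabs_le_between in B2.
  apply Rabs_le_between in B3. apply Rabs_le_between in B4.
  assert (X1 : (τ - s) * (2 * eps + 2 * η * Mg) <= 2 * τ * eps + 2 * η * τ * Mg).
  { assert (0 <= η * Mg) by nra. nra. }
  assert (X2 : 4 * η * Mf + 2 * η * τ * Mg <= 2 * eps) by nra.
  apply Rabs_le. rewrite Ch. lra. }
rewrite (EF 0 1 τ), (EF 0 1 0) by lra. fold (Φf 0 1 τ) (Φf 0 1 0). rewrite Main.
assert (E1 : RInt (fun σ => Ψ 1 σ - Ψ 0 σ) 0 τ = RInt (fun σ => Pc 1 σ - Pc 0 σ) 0 τ).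
{ apply RI_ext. intros σ Hσ. rewrite Rmin_left in Hσ by lra. rewrite Rmax_right in Hσ by lra.
  unfold Pc. destruct (Eid 1 σ) as [-> ->]; try lra; destruct (Eid 0 σ) as [-> _]; try lra; try reflexivity. }
assert (E2 : RInt (fun σ => RInt (fun x => g x σ) 0 1) 0 τ = RInt (Φg 0 1) 0 τ).
{ apply RI_ext. intros σ Hσ. rewrite Rmin_left in Hσ by lra. rewrite Rmax_right in Hσ by lra.
  unfold Φg. apply RI_ext. intros x Hx. rewrite Rmin_left in Hx by lra. rewrite Rmax_right in Hx by lra.
  unfold Gc. destruct (Eid x σ) as [-> ->]; try lra; try reflexivity. }
rewrite E1, E2. unfold Q. apply RI_minus.
- apply exRI_cont. intros σ. apply continuity_pt_minus.
  apply (cont2_all_t Pc 1 CPc). apply (cont2_all_t Pc 0 CPc).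
- apply exRI_cont. apply CΦg. lra.
Qed.

Lemma cont_on_op2 (h : R -> R -> R) (f g : R -> R -> R) D :
  (forall a b, filterlim (fun z : R * R => h (fst z) (snd z)) (filter_prod (locally a) (locally b)) (locally (h a b))) ->
  cont_on f D -> cont_on g D -> cont_on (fun x t => h (f x t) (g x t)) D.
Proof.
intros Hh Hf Hg x t Hxt.
apply (filterlim_comp_2 (fun p : R * R => f (fst p) (snd p)) (fun p : R * R => g (fst p) (snd p)) h
  (G := locally (f x t)) (H := locally (g x t))).
apply Hf; auto. apply Hg; auto. apply Hh.
Qed.

Lemma flim_plus a b : filterlim (fun z : R * R => fst z + snd z) (filter_prod (locally a) (locally b)) (locally (a + b)).
Proof. exact (filterlim_plus (V:=R_NormedModule) a b). Qed.
Lemma flim_mult a b : filterlim (fun z : R * R => fst z * snd z) (filter_prod (locally a) (locally b)) (locally (a * b)).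
Proof. exact (filterlim_mult (K:=R_AbsRing) a b). Qed.
Lemma flim_minus a b : filterlim (fun z : R * R => fst z - snd z) (filter_prod (locally a) (locally b)) (locally (a - b)).
Proof.
apply (filterlim_comp_2 (fun z : R * R => fst z) (fun z : R * R => opp (snd z)) (fun u v => plus u v)
  (G := locally a) (H := locally (opp b))).
- apply filterlim_fst.
- apply (filterlim_comp _ _ _ snd opp _ (locally b)). apply filterlim_snd. apply (filterlim_opp (V:=R_NormedModule)).
- apply (filterlim_plus (V:=R_NormedModule)).
Qed.

Lemma cont_on_plus f g D : cont_on f D -> cont_on g D -> cont_on (fun x t => f x t + g x t) D.
Proof. apply (cont_on_op2 Rplus). apply flim_plus. Qed.
Lemma cont_on_minus f g D : cont_on f D -> cont_on g D -> cont_on (fun x t => f x t - g x t) D.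
Proof. apply (cont_on_op2 Rminus). apply flim_minus. Qed.
Lemma cont_on_mult f g D : cont_on f D -> cont_on g D -> cont_on (fun x t => f x t * g x t) D.
Proof. apply (cont_on_op2 Rmult). apply flim_mult. Qed.

Lemma cont_on_const c D : cont_on (fun _ _ => c) D.
Proof. intros x t _. apply filterlim_const. Qed.

Lemma cont_on_comp1 (φ : R -> R) f D : cont_on f D -> (forall x t, D x t -> continuity_pt φ (f x t)) ->
  cont_on (fun x t => φ (f x t)) D.
Proof.
intros Hf Hφ x t Hxt.
apply (filterlim_comp _ _ _ (fun p : R * R => f (fst p) (snd p)) φ _ (locally (f x t))).
apply Hf; auto. apply continuity_pt_filterlim. apply Hφ; auto.
Qed.

Lemma cont_on_time (h : R -> R) D : (forall x t, D x t -> continuity_pt h t) ->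
  cont_on (fun _ t => h t) D.
Proof.
intros Hh x t Hxt.
apply (filterlim_comp _ _ _ (fun p : R * R => snd p) h _ (locally t)).
- intros P [eps HP]. exists eps. intros y [_ Hy] _. apply HP. exact Hy.
- apply continuity_pt_filterlim. apply (Hh x t Hxt).
Qed.

Lemma ent_deriv (w a : R -> R) w' a' s : 0 < w s -> 0 < a s -> is_derive w s w' -> is_derive a s a' ->
  is_derive (fun s => ent_density (w s) (a s)) s ((ln (w s) - ln (a s)) * w' - (a' / a s) * (w s - a s)).
Proof.
intros Hw Ha Dw Da. unfold ent_density.
auto_derive.
- repeat split; auto; try (exists w'; exact Dw); try (exists a'; exact Da).
- replace (Derive (fun x => w x) s) with w' by (symmetry; apply is_derive_unique; exact Dw).
  replace (Derive (fun x => a x) s) with a' by (symmetry; apply is_derive_unique; exact Da).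
  field. lra.
Qed.

Lemma sq_deriv (w : R -> R) w' c s : is_derive w s w' ->
  is_derive (fun s => /2 * (w s - c)^2) s ((w s - c) * w').
Proof.
intros Dw. auto_derive.
- exists w'; exact Dw.
- replace (Derive (fun x => w x) s) with w' by (symmetry; apply is_derive_unique; exact Dw). field.
Qed.

Lemma flux_deriv (w z p : R -> R) (w' z' p' c1 c2 y : R) : 0 < w y ->
  is_derive w y w' -> is_derive z y z' -> is_derive p y p' ->
  is_derive (fun y => (ln (w y) - c1) * (z y + w y * p y) - c2 * w y) y
   ((w' / w y) * (z y + w y * p y) + (ln (w y) - c1) * (z' + w' * p y + w y * p') - c2 * w').
Proof.
intros Hw Dw Dz Dp. auto_derive.
- repeat split; auto; try (exists w'; exact Dw); try (exists z'; exact Dz); try (exists p'; exact Dp).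
- replace (Derive (fun x => w x) y) with w' by (symmetry; apply is_derive_unique; exact Dw).
  replace (Derive (fun x => z x) y) with z' by (symmetry; apply is_derive_unique; exact Dz).
  replace (Derive (fun x => p x) y) with p' by (symmetry; apply is_derive_unique; exact Dp).
  field. lra.
Qed.

Lemma ln_le_sub1 x : 0 < x -> ln x <= x - 1.
Proof. intros. pose proof (exp_ineq1_le (ln x)). rewrite exp_ln in H0 by auto. lra. Qed.

Lemma ent_nonneg w a : 0 < w -> 0 < a -> 0 <= ent_density w a.
Proof.
intros Hw Ha. unfold ent_density.
pose proof (ln_le_sub1 (a / w) ltac:(apply Rdiv_lt_0_compat; auto)).
rewrite ln_div in H by auto.
assert (w * (ln a - ln w) <= w * (a / w - 1)) by (apply Rmult_le_compat_l; lra).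
replace (w * (a / w - 1)) with (a - w) in H0 by (field; lra).
nra.
Qed.

Lemma ln9 : 2 <= ln 9.
Proof.
rewrite <- (ln_exp 2). apply ln_le. apply exp_pos.
replace 2 with (1 + 1) by ring. rewrite exp_plus.
pose proof exp_le_3. pose proof (exp_pos 1). nra.
Qed.

Lemma ent_bound w a : 0 < w -> 0 < a -> Rabs (w - a) <= ent_density w a + 16 * a.
Proof.
intros Hw Ha. pose proof (ent_nonneg w a Hw Ha).
destruct (Rle_dec w a).
- rewrite Rabs_left1 by lra. lra.
- rewrite Rabs_pos_eq by lra.
  destruct (Rle_dec w (9 * a)). lra.
  unfold ent_density.
  assert (2 <= ln w - ln a).
  { rewrite <- ln_div by auto. eapply Rle_trans. apply ln9. apply ln_le. lra.
    apply Rmult_le_reg_r with a; auto. unfold Rdiv. rewrite Rmult_assoc, Rinv_l by lra. lra. }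
  nra.
Qed.

Lemma cont_ln x : 0 < x -> continuity_pt ln x.
Proof. intros. apply derivable_continuous_pt. exists (/ x). apply derivable_pt_lim_ln; auto. Qed.

Lemma RInt_deriv (h : R -> R) (Hc : forall x, continuity_pt h x) x :
  is_derive (fun s => RInt h 0 s) x (h x).
Proof.
apply (is_derive_RInt h _ 0 x).
- apply filter_forall. intros b. apply (RInt_correct (V:=R_CompleteNormedModule)).
  apply (ex_RInt_continuous (V:=R_CompleteNormedModule)). intros; apply continuity_pt_filterlim; apply Hc.
- apply continuity_pt_filterlim; apply Hc.
Qed.

Lemma gronwall (Y w k β : R -> R) A t : 0 <= t ->
  (forall σ, continuity_pt w σ) -> (forall σ, continuity_pt k σ) -> (forall σ, continuity_pt β σ) ->
  (forall σ, 0 <= k σ) -> (forall σ, 0 <= β σ) ->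
  (forall σ, 0 <= σ <= t -> Y σ <= A + RInt (fun r => Rabs (w r)) 0 σ) ->
  (forall σ, 0 <= σ <= t -> Rabs (w σ) <= k σ * Y σ + β σ) ->
  Y t <= (A + RInt β 0 t) * exp (RInt k 0 t).
Proof.
intros Ht Cw Ck Cb Hk Hb HY Hw.
set (aw := fun r => Rabs (w r)).
assert (Caw : forall σ, continuity_pt aw σ).
{ intros σ. exact (continuity_pt_comp w Rabs σ (Cw σ) (Rcontinuity_abs _)). }
set (Z := fun s => RInt aw 0 s). set (K := fun s => RInt k 0 s). set (B := fun s => RInt β 0 s).
assert (DZ := RInt_deriv aw Caw). assert (DK := RInt_deriv k Ck). assert (DB := RInt_deriv β Cb).
assert (K0 : forall σ, 0 <= σ -> 0 <= K σ).
{ intros σ Hσ. unfold K. destruct (Req_dec σ 0) as [->|]. rewrite RI_point; lra.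
  apply RInt_ge_0. lra. apply (ex_RInt_continuous (V:=R_CompleteNormedModule)).
  intros; apply continuity_pt_filterlim; apply Ck. intros; apply Hk. }
set (G := fun s => exp (- K s) * (A + Z s) - B s).
set (G' := fun s => exp (- K s) * (- k s * (A + Z s) + aw s) - β s).
assert (DG : forall σ, is_derive G σ (G' σ)).
{ intros σ. unfold G, G'. auto_derive.
  - repeat split; auto. exists (k σ); apply DK. exists (aw σ); apply DZ. exists (β σ); apply DB.
  - replace (Derive (fun x => K x) σ) with (k σ) by (symmetry; apply is_derive_unique; apply DK).
    replace (Derive (fun x => Z x) σ) with (aw σ) by (symmetry; apply is_derive_unique; apply DZ).
    replace (Derive (fun x => B x) σ) with (β σ) by (symmetry; apply is_derive_unique; apply DB).
    ring. }
assert (G'neg : forall σ, 0 <= σ <= t -> G' σ <= 0).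
{ intros σ Hσ. unfold G'.
  assert (Hy : aw σ <= k σ * (A + Z σ) + β σ).
  { unfold aw. eapply Rle_trans. apply Hw; auto. specialize (HY σ Hσ). specialize (Hk σ). fold aw in HY. fold (Z σ) in HY. nra. }
  assert (He : exp (- K σ) <= 1).
  { rewrite <- exp_0. destruct (Req_dec (K σ) 0) as [E|E]. rewrite E, Ropp_0. lra.
    left. apply exp_increasing. pose proof (K0 σ ltac:(lra)). lra. }
  pose proof (exp_pos (- K σ)). specialize (Hb σ). nra. }
assert (Gt : G t <= G 0).
{ destruct (Req_dec t 0) as [->|Htn]. lra.
  destruct (MVT_cor2 G G' 0 t ltac:(lra)) as [c [Hc1 Hc2]].
  { intros c _. apply is_derive_Reals. apply DG. }
  assert (G' c <= 0) by (apply G'neg; lra). nra. }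
unfold G in Gt. unfold Z, K, B in Gt. rewrite !RI_point in Gt.
rewrite Ropp_0, exp_0 in Gt.
fold (Z t) (K t) (B t) in Gt.
assert (HYt := HY t ltac:(lra)). fold aw in HYt. fold (Z t) in HYt.
assert (Ep := exp_pos (K t)).
assert (E1 : exp (- K t) * exp (K t) = 1) by (rewrite <- exp_plus; replace (- K t + K t) with 0 by ring; apply exp_0).
assert (A + Z t <= (A + B t) * exp (K t)).
{ replace (A + Z t) with (exp (- K t) * (A + Z t) * exp (K t)) by (rewrite Rmult_comm, <- Rmult_assoc, (Rmult_comm (exp (K t))), E1; ring).
  apply Rmult_le_compat_r; lra. }
fold (B t) (K t). lra.
Qed.

Lemma exRI_Qcl h T t : cont_on h (Qcl T) -> 0 <= t < T -> ex_RInt (fun x => h x t) 0 1.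
Proof.
intros Ch Ht.
assert (C := clamp_cont h (Qcl T) 0 1 0 t Ch ltac:(lra) ltac:(lra) (Qcl_rect T t ltac:(lra))).
apply (exRI_ext (fun x => h (clp 0 1 x) (clp 0 t t))).
- intros x Hx. rewrite Rmin_left in Hx by lra. rewrite Rmax_right in Hx by lra.
  rewrite !clp_id by lra. reflexivity.
- apply exRI_cont. apply (cont2_all_x _ t C).
Qed.

Lemma param_Qcl h T t : cont_on h (Qcl T) -> 0 <= t < T ->
  exists W, (forall σ, continuity_pt W σ) /\ forall σ, 0 <= σ <= t -> W σ = RInt (fun x => h x σ) 0 1.
Proof.
intros Ch Ht.
assert (C := clamp_cont h (Qcl T) 0 1 0 t Ch ltac:(lra) ltac:(lra) (Qcl_rect T t ltac:(lra))).
exists (fun σ => RInt (fun x => h (clp 0 1 x) (clp 0 t σ)) 0 1). split.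
- apply pc; auto; lra.
- intros σ Hσ. apply RI_ext. intros x Hx. rewrite Rmin_left in Hx by lra. rewrite Rmax_right in Hx by lra.
  rewrite !clp_id by lra. reflexivity.
Qed.

Lemma exRI_param h T t : cont_on h (Qcl T) -> 0 <= t < T ->
  ex_RInt (fun σ => RInt (fun x => h x σ) 0 1) 0 t.
Proof.
intros Ch Ht. destruct (param_Qcl h T t Ch Ht) as [W [CW EW]].
apply (exRI_ext W). intros σ Hσ. rewrite Rmin_left in Hσ by lra. rewrite Rmax_right in Hσ by lra.
apply EW; lra. apply exRI_cont; auto.
Qed.

Lemma cont_on_mono f (D D' : R -> R -> Prop) : cont_on f D -> (forall x t, D' x t -> D x t) -> cont_on f D'.
Proof.
intros Hf HD x t Hxt P HP. specialize (Hf x t (HD x t Hxt) P HP).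
unfold filtermap, within in *. revert Hf. apply filter_imp. intros p H1 H2. apply H1. apply HD. exact H2.
Qed.

Lemma cont_on_pow2 f D : cont_on f D -> cont_on (fun x t => (f x t)^2) D.
Proof.
intros Hf. apply (cont_on_comp1 (fun z => z^2) f D Hf).
intros. apply derivable_continuous_pt. apply derivable_pt_pow.
Qed.

Lemma cont_on_inv f D : cont_on f D -> (forall x t, D x t -> f x t <> 0) -> cont_on (fun x t => / f x t) D.
Proof.
intros Hf Hn. apply (cont_on_comp1 Rinv f D Hf).
intros x t Hxt. exact (continuity_pt_inv (fun z => z) (f x t) (continuity_pt_id _) (Hn x t Hxt)).
Qed.

Lemma Qop_Qcl T x t : Qop T x t -> Qcl T x t.
Proof. unfold Qop, Qcl. lra. Qed.

Lemma L1_link (w : R -> R) : (forall x, continuity_pt w x) -> L1_Rplus w ->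
  exists L : R, 0 <= L /\ forall t, 0 <= t -> RInt (fun s => Rabs (w s)) 0 t <= L.
Proof. exact (Bridge.L1_link w). Qed.

Ltac ctac := repeat (first [ assumption | apply cont_on_minus | apply cont_on_plus | apply cont_on_mult | apply cont_on_const ]).

Theorem mainTheorem9 :
  forall (u0 v0 alpha : R -> R) (alpha_low : R),
    (forall x, 0 <= x <= 1 -> 0 < u0 x) ->
    H2_01 u0 -> H2_01 v0 ->
    u0 0 = alpha 0 -> u0 1 = alpha 0 ->
    smooth alpha ->
    0 < alpha_low -> (forall t, 0 <= t -> alpha_low <= alpha t) ->
    L1_Rplus (Derive alpha) -> L1_Rplus (Derive_n alpha 2) ->
    let vbar := RInt v0 0 1 in
    exists C : R, 0 < C /\
      forall (T : R) (u v ux vx : R -> R -> R),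
        0 < T ->
        classical_solution alpha u0 v0 T u v ux vx ->
        forall t, 0 <= t < T ->
          RInt (fun x => v x t) 0 1 = vbar /\
          rel_entropy u alpha t
            + L2sq01 (fun x => v x t - vbar)
            + RInt (fun tau => RInt (fun x => (ux x tau) ^ 2 / u x tau) 0 1) 0 t
          <= C.
Proof.
intros u0 v0 alpha alow Hu0 H2u H2v Hc0 Hc1 Hsm Hal Hlow HL1 HL2 vbar.
set (ap := Derive alpha).
assert (Dal : forall t, is_derive alpha t (ap t)).
{ intros t. apply Derive_correct. exact (Hsm 0%nat t). }
assert (Cap : forall t, continuity_pt ap t).
{ intros t. apply continuity_pt_filterlim. exact (ex_derive_continuous _ _ (Hsm 1%nat t)). }
assert (Cal : forall t, continuity_pt alpha t).
{ intros t. apply continuity_pt_filterlim. apply (ex_derive_continuous (K:=R_AbsRing) (V:=R_NormedModule)). exists (ap t). apply Dal. }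
destruct (L1_link ap Cap HL1) as [L [HL0 HL]].
set (A := RInt (fun x => ent_density (u0 x) (alpha 0) + /2 * (v0 x - vbar)^2) 0 1).
set (Bd := (Rabs A + 16 * L) * exp (L / alow)).
exists (2 * Bd + 1). split.
{ unfold Bd. pose proof (exp_pos (L/alow)). pose proof (Rabs_pos A). nra. }
intros T u v ux vx HT Hsol t Ht.
destruct Hsol as [Cu [Cv [Cux [Cvx [Hxd [[ut [vt [uxx [Cut [Cvt [Cuxx Heq]]]]]] [Hinit [Hbd Hpos]]]]]]]].
assert (alpos : forall s, 0 <= s -> 0 < alpha s) by (intros s Hs; pose proof (Hlow s Hs); lra).
assert (tpos : forall x s, Qcl T x s -> 0 <= s) by (unfold Qcl; intros; lra).
assert (Aa : cont_on (fun _ s => alpha s) (Qcl T)) by (apply cont_on_time; auto).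
assert (La : cont_on (fun _ s => ln (alpha s)) (Qcl T)).
{ apply cont_on_time. intros x s Hxs. apply (continuity_pt_comp alpha ln). auto. apply cont_ln. apply alpos. eauto. }
assert (Ia : cont_on (fun _ s => ap s * / alpha s) (Qcl T)).
{ apply cont_on_time. intros x s Hxs. apply (continuity_pt_div ap alpha); auto. pose proof (alpos s (tpos x s Hxs)). lra. }
assert (Lu : cont_on (fun x s => ln (u x s)) (Qcl T)).
{ apply cont_on_comp1; auto. intros. apply cont_ln. auto. }
assert (Iu : cont_on (fun x s => / u x s) (Qcl T)).
{ apply cont_on_inv; auto. intros. pose proof (Hpos x t0 H). lra. }
assert (Pv : cont_on (fun x s => (v x s - vbar)^2) (Qcl T)).
{ apply cont_on_pow2. ctac. }
assert (Pux : cont_on (fun x s => (ux x s)^2) (Qcl T)) by (apply cont_on_pow2; ctac).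
assert (QQ := Qop_Qcl T).
assert (Aa' := cont_on_mono _ _ _ Aa QQ). assert (La' := cont_on_mono _ _ _ La QQ).
assert (Ia' := cont_on_mono _ _ _ Ia QQ). assert (Lu' := cont_on_mono _ _ _ Lu QQ).
assert (Iu' := cont_on_mono _ _ _ Iu QQ). assert (Cu' := cont_on_mono _ _ _ Cu QQ).
assert (Cv' := cont_on_mono _ _ _ Cv QQ). assert (Cux' := cont_on_mono _ _ _ Cux QQ).
assert (Cvx' := cont_on_mono _ _ _ Cvx QQ).
assert (Hv0 : RInt (fun x => v x 0) 0 1 = vbar).
{ unfold vbar. apply RI_ext. intros x Hx. rewrite Rmin_left in Hx by lra. rewrite Rmax_right in Hx by lra.
  apply Hinit; lra. }
assert (Mass : RInt (fun x => v x t) 0 1 = vbar).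
{ destruct (Req_dec t 0) as [->|Htn]. exact Hv0.
  assert (Hc := core T t v vt u ux (fun _ _ => 0) ltac:(lra) Cv Cu (cont_on_const 0 _) Cvt Cux').
  rewrite Hv0 in Hc.
  rewrite (RI_ext (fun σ => u 1 σ - u 0 σ) (fun _ => 0)) in Hc.
  2:{ intros σ Hσ. rewrite Rmin_left in Hσ by lra. rewrite Rmax_right in Hσ by lra.
      destruct (Hbd σ) as [E0 E1]. lra. rewrite E0, E1. ring. }
  rewrite (RI_ext (fun σ => RInt (fun _ => 0) 0 1) (fun _ => 0)) in Hc.
  2:{ intros σ _. rewrite RI_const. ring. }
  rewrite !RI_const in Hc.
  assert (RInt (fun x => v x t) 0 1 - vbar = 0).
  { rewrite Hc. 2:{ intros x s Hxs. destruct (Heq x s Hxs) as [H1 [H2 [H3 [H4 H5]]]].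
      split. exact H2. split. apply (Hxd x s). apply Hxs. unfold Qop in Hxs; lra. lra. }
    ring. }
  lra. }
split. exact Mass.
set (e := fun x s => ent_density (u x s) (alpha s) + /2 * (v x s - vbar)^2).
set (et := fun x s => (ln (u x s) - ln (alpha s)) * ut x s - (ap s / alpha s) * (u x s - alpha s) + (v x s - vbar) * vt x s).
set (Ψ := fun x s => (ln (u x s) - ln (alpha s)) * (ux x s + u x s * v x s) - vbar * u x s).
set (ψx := fun x s => (ux x s / u x s) * (ux x s + u x s * v x s) + (ln (u x s) - ln (alpha s)) * (uxx x s + ux x s * v x s + u x s * vx x s) - vbar * ux x s).
set (Dd := fun x s => ux x s ^ 2 / u x s + (ap s / alpha s) * (u x s - alpha s)).
assert (Ce : cont_on e (Qcl T)).
{ unfold e, ent_density. ctac. }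
assert (CΨ : cont_on Ψ (Qcl T)) by (unfold Ψ; ctac).
assert (CD : cont_on Dd (Qcl T)) by (unfold Dd, Rdiv; ctac).
assert (Cet : cont_on et (Qop T)) by (unfold et, Rdiv; ctac).
assert (Cψ : cont_on ψx (Qop T)) by (unfold ψx, Rdiv; ctac).
assert (HD : forall x s, Qop T x s -> is_derive (fun s => e x s) s (et x s) /\
   is_derive (fun y => Ψ y s) x (ψx x s) /\ et x s = ψx x s - Dd x s).
{ intros x s Hxs. destruct (Heq x s Hxs) as [Dut [Dvt [Duxx [E1 E2]]]].
  assert (Hus : 0 < u x s) by (apply Hpos; apply QQ; auto).
  assert (Has : 0 < alpha s) by (apply alpos; unfold Qop in Hxs; lra).
  destruct (Hxd x s) as [Dux Dvx]. apply Hxs. unfold Qop in Hxs; lra.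
  split; [|split].
  - unfold e, et.
    apply (is_derive_plus (K:=R_AbsRing) (V:=R_NormedModule)
      (fun s => ent_density (u x s) (alpha s)) (fun s => /2 * (v x s - vbar)^2)).
    + apply (ent_deriv (fun s => u x s) alpha); auto.
    + apply (sq_deriv (fun s => v x s)); auto.
  - unfold Ψ, ψx. apply (flux_deriv (fun y => u y s) (fun y => ux y s) (fun y => v y s)); auto.
  - unfold et, ψx, Dd.
    replace (ut x s) with (uxx x s + (ux x s * v x s + u x s * vx x s)) by lra.
    replace (vt x s) with (ux x s) by lra.
    field. lra. }
assert (He0 : RInt (fun x => e x 0) 0 1 = A).
{ unfold A. apply RI_ext. intros x Hx. rewrite Rmin_left in Hx by lra. rewrite Rmax_right in Hx by lra.
  unfold e. destruct (Hinit x) as [E1 E2]. lra. rewrite E1, E2. reflexivity. }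
assert (Iden : forall σ, 0 <= σ <= t -> RInt (fun x => e x σ) 0 1 = A - RInt (fun r => RInt (fun x => Dd x r) 0 1) 0 σ).
{ intros σ Hσ. destruct (Req_dec σ 0) as [->|Hσn].
  - rewrite RI_point, He0. unfold Rminus. rewrite Ropp_0, Rplus_0_r. reflexivity.
  - assert (Hc := core T σ e et Ψ ψx Dd ltac:(lra) Ce CΨ CD Cet Cψ HD).
    rewrite He0 in Hc.
    rewrite (RI_ext (fun r => Ψ 1 r - Ψ 0 r) (fun _ => 0)) in Hc.
    2:{ intros r Hr. rewrite Rmin_left in Hr by lra. rewrite Rmax_right in Hr by lra.
        destruct (Hbd r) as [E0 E1]. lra. unfold Ψ. rewrite E0, E1. ring. }
    rewrite RI_const in Hc. lra. }
set (g2 := fun x s => ux x s ^ 2 / u x s).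
set (G := fun r => RInt (fun x => g2 x r) 0 1).
set (Wf := fun x s => ap s / alpha s * (u x s - alpha s)).
set (W := fun r => RInt (fun x => Wf x r) 0 1).
set (en := fun x s => ent_density (u x s) (alpha s)).
set (E := fun r => RInt (fun x => en x r) 0 1).
set (Y := fun r => RInt (fun x => e x r) 0 1 + RInt G 0 r).
assert (Cg2 : cont_on g2 (Qcl T)) by (unfold g2, Rdiv; ctac).
assert (CWf : cont_on Wf (Qcl T)) by (unfold Wf, Rdiv; ctac).
assert (Cen : cont_on en (Qcl T)) by (unfold en, ent_density; ctac).
assert (Cum : cont_on (fun x s => u x s - alpha s) (Qcl T)) by ctac.
assert (Cvv : cont_on (fun x s => (v x s - vbar)^2) (Qcl T)) by ctac.
assert (Hint : forall r, 0 <= r <= t -> 0 <= r < T) by (intros; lra).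
assert (Qr : forall x r, 0 <= x <= 1 -> 0 <= r <= t -> Qcl T x r) by (intros; unfold Qcl; lra).
assert (G0 : forall r, 0 <= r <= t -> 0 <= G r).
{ intros r Hr. unfold G. apply RI_ge0. lra. apply (exRI_Qcl g2 T r Cg2 (Hint r Hr)).
  intros x Hx. unfold g2. pose proof (Hpos x r (Qr x r Hx Hr)).
  apply Rmult_le_pos. apply pow2_ge_0. left; apply Rinv_0_lt_compat; auto. }
assert (IG0 : forall r, 0 <= r <= t -> 0 <= RInt G 0 r).
{ intros r Hr. apply RI_ge0. lra. apply (exRI_param g2 T r Cg2 (Hint r Hr)).
  intros q Hq. apply G0. lra. }
assert (E0 : forall r, 0 <= r <= t -> 0 <= E r).
{ intros r Hr. unfold E. apply RI_ge0. lra. apply (exRI_Qcl en T r Cen (Hint r Hr)).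
  intros x Hx. unfold en. apply ent_nonneg. apply Hpos. apply Qr; auto. apply alpos; lra. }
assert (eE : forall r, 0 <= r <= t -> RInt (fun x => e x r) 0 1 = E r + /2 * RInt (fun x => (v x r - vbar)^2) 0 1).
{ intros r Hr. unfold e, E, en. rewrite RI_plus. rewrite RI_scal. reflexivity.
  apply (exRI_Qcl _ T r Cvv (Hint r Hr)).
  apply (exRI_Qcl _ T r Cen (Hint r Hr)).
  apply (ex_RInt_scal (V:=R_NormedModule) (fun x => (v x r - vbar)^2) 0 1 (/2)). apply (exRI_Qcl _ T r Cvv (Hint r Hr)). }
assert (YE : forall r, 0 <= r <= t -> E r <= Y r).
{ intros r Hr. unfold Y. rewrite eE by auto.
  assert (0 <= RInt (fun x => (v x r - vbar)^2) 0 1).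
  { apply RI_ge0. lra. apply (exRI_Qcl _ T r Cvv (Hint r Hr)). intros; apply pow2_ge_0. }
  pose proof (IG0 r Hr). lra. }
assert (YW : forall r, 0 <= r <= t -> Y r = A - RInt W 0 r).
{ intros r Hr. unfold Y. rewrite Iden by auto.
  rewrite (RI_ext (fun q => RInt (fun x => Dd x q) 0 1) (fun q => G q + W q)).
  2:{ intros q Hq. rewrite Rmin_left in Hq by lra. rewrite Rmax_right in Hq by lra.
      unfold G, W, Dd, g2, Wf. apply RI_plus.
      apply (exRI_Qcl g2 T q Cg2). lra. apply (exRI_Qcl Wf T q CWf). lra. }
  rewrite RI_plus. ring.
  apply (exRI_param g2 T r Cg2 (Hint r Hr)). apply (exRI_param Wf T r CWf (Hint r Hr)). }
destruct (param_Qcl Wf T t CWf ltac:(lra)) as [Wc [CWc EWc]].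
set (k := fun σ => / alow * Rabs (ap σ)).
set (β := fun σ => 16 * Rabs (ap σ)).
assert (Cab : forall σ, continuity_pt (fun σ => Rabs (ap σ)) σ).
{ intros σ. exact (continuity_pt_comp ap Rabs σ (Cap σ) (Rcontinuity_abs _)). }
assert (Ck : forall σ, continuity_pt k σ).
{ intros σ. exact (continuity_pt_scal (fun σ => Rabs (ap σ)) (/alow) σ (Cab σ)). }
assert (Cβ : forall σ, continuity_pt β σ).
{ intros σ. exact (continuity_pt_scal (fun σ => Rabs (ap σ)) 16 σ (Cab σ)). }
assert (Hk : forall σ, 0 <= k σ).
{ intros σ. unfold k. apply Rmult_le_pos. left; apply Rinv_0_lt_compat; auto. apply Rabs_pos. }
assert (Hβ : forall σ, 0 <= β σ) by (intros σ; unfold β; pose proof (Rabs_pos (ap σ)); lra).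
assert (Gr := gronwall Y Wc k β A t ltac:(lra) CWc Ck Cβ Hk Hβ).
assert (Yt : Y t <= (A + RInt β 0 t) * exp (RInt k 0 t)).
{ apply Gr.
  - intros σ Hσ. rewrite YW by auto.
    rewrite (RI_ext W Wc).
    2:{ intros q Hq. rewrite Rmin_left in Hq by lra. rewrite Rmax_right in Hq by lra. symmetry. apply EWc. lra. }
    pose proof (abs_RInt_le Wc 0 σ ltac:(lra) (exRI_cont Wc 0 σ CWc)).
    pose proof (Rle_abs (- RInt Wc 0 σ)). rewrite Rabs_Ropp in H0. lra.
  - intros σ Hσ. rewrite EWc by auto. fold (W σ).
    assert (Has : 0 < alpha σ) by (apply alpos; lra).
    assert (HW : W σ = ap σ / alpha σ * RInt (fun x => u x σ - alpha σ) 0 1).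
    { unfold W, Wf. apply RI_scal. apply (exRI_Qcl _ T σ Cum). lra. }
    assert (Cau : cont_on (fun x s => Rabs (u x s - alpha s)) (Qcl T)).
    { apply (cont_on_comp1 Rabs (fun x s => u x s - alpha s)); auto. intros; apply Rcontinuity_abs. }
    assert (Cen16 : cont_on (fun x s => en x s + 16 * alpha s) (Qcl T)) by ctac.
    assert (B1 : Rabs (RInt (fun x => u x σ - alpha σ) 0 1) <= E σ + 16 * alpha σ).
    { eapply Rle_trans. apply abs_RInt_le. lra. apply (exRI_Qcl _ T σ Cum). lra.
      apply Rle_trans with (RInt (fun x => en x σ + 16 * alpha σ) 0 1).
      - apply RI_le. lra. apply (exRI_Qcl _ T σ Cau). lra. apply (exRI_Qcl _ T σ Cen16). lra.
        intros x Hx. unfold en. apply ent_bound. apply Hpos. apply Qr; auto. auto.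
      - rewrite RI_plus. rewrite RI_const. unfold E. lra.
        apply (exRI_Qcl _ T σ Cen). lra. apply (ex_RInt_const (V:=R_NormedModule)). }
    rewrite HW, Rabs_mult. unfold Rdiv. rewrite Rabs_mult, (Rabs_pos_eq (/ alpha σ)).
    2:{ left; apply Rinv_0_lt_compat; auto. }
    assert (Hinv : / alpha σ <= / alow) by (apply Rinv_le_contravar; auto; apply Hlow; lra).
    pose proof (E0 σ Hσ). pose proof (YE σ Hσ). pose proof (Rabs_pos (ap σ)).
    pose proof (Rabs_pos (RInt (fun x => u x σ - alpha σ) 0 1)).
    assert (Hia : 0 < / alpha σ) by (apply Rinv_0_lt_compat; auto).
    unfold k, β.
    assert (Rabs (ap σ) * / alpha σ * Rabs (RInt (fun x => u x σ - alpha σ) 0 1)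
             <= Rabs (ap σ) * / alpha σ * (E σ + 16 * alpha σ)).
    { apply Rmult_le_compat_l. nra. auto. }
    assert (Rabs (ap σ) * / alpha σ * (E σ + 16 * alpha σ) = Rabs (ap σ) * / alpha σ * E σ + 16 * Rabs (ap σ)).
    { field. lra. }
    assert (Rabs (ap σ) * / alpha σ * E σ <= / alow * Rabs (ap σ) * Y σ).
    { apply Rle_trans with (Rabs (ap σ) * / alow * E σ).
      apply Rmult_le_compat_r; auto. apply Rmult_le_compat_l; auto.
      rewrite (Rmult_comm (/ alow)). apply Rmult_le_compat_l; auto.
      apply Rmult_le_pos; auto. left; apply Rinv_0_lt_compat; auto. }
    lra. }
assert (exab : ex_RInt (fun σ => Rabs (ap σ)) 0 t) by (apply exRI_cont; auto).
assert (Rb : RInt β 0 t <= 16 * L).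
{ unfold β. rewrite RI_scal by auto. pose proof (HL t ltac:(lra)). lra. }
assert (Rk : RInt k 0 t <= L / alow).
{ unfold k. rewrite RI_scal by auto. pose proof (HL t ltac:(lra)).
  unfold Rdiv. rewrite Rmult_comm. apply Rmult_le_compat_r. left; apply Rinv_0_lt_compat; auto. auto. }
assert (Hexp : exp (RInt k 0 t) <= exp (L / alow)).
{ destruct (Req_dec (RInt k 0 t) (L / alow)) as [->|Hn]. lra. left. apply exp_increasing. lra. }
assert (YB : Y t <= Bd).
{ unfold Bd. pose proof (exp_pos (RInt k 0 t)). pose proof (exp_pos (L / alow)).
  pose proof (Rle_abs A).
  destruct (Rle_dec (A + RInt β 0 t) 0).
  - assert ((A + RInt β 0 t) * exp (RInt k 0 t) <= 0) by nra.
    pose proof (Rabs_pos A). nra.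
  - apply Rle_trans with ((A + RInt β 0 t) * exp (RInt k 0 t)); auto.
    apply Rle_trans with ((A + RInt β 0 t) * exp (L / alow)). apply Rmult_le_compat_l; lra.
    apply Rmult_le_compat_r; lra. }
assert (Ht' : 0 <= t <= t) by lra.
pose proof (eE t Ht') as Et. pose proof (E0 t Ht') as E0t. pose proof (IG0 t Ht') as IGt.
change (E t + RInt (fun x => (v x t - vbar)^2) 0 1 + RInt G 0 t <= 2 * Bd + 1).
unfold Y in YB. rewrite Et in YB. lra.
Qed.
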